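(* Let $n\ge1$. The eigenvalues of $D^n$ are $1/2$ with multiplicity $2$ and $0$ with multiplicity $2^n-2$. The unit eigenvectors corresponding to the eigenvalue $1/2$ are $\psi_0^n$ and $\psi_1^n$, where $\psi_0^n\in\mathbb{C}^{2^n}$ has $j$-th coordinate ($j=0,\dots,2^n-1$) equal to $2^{-(n-1)/2}i^{c_n(j)}$ for $j$ even and $0$ for $j$ odd, and $\psi_1^n$ has $j$-th coordinate $0$ for $j$ even and $2^{-(n-1)/2}i^{c_n(j)}$ for $j$ odd.
   Context: For $n\ge1$, an $n$-path is a string $\alpha_0\alpha_1\cdots\alpha_n$ with $\alpha_k\in\{0,1\}$, $\alpha_0=0$; the $n$-paths are identified with $j\in\{0,\dots,2^n-1\}$, the path $\omega_j$ being the one whose string is the binary representation of $j$ (with $\alpha_n$ least significant). $D^n$ is the $2^n\times2^n$ matrix with $D^n_{jk}=D^n(\omega_j,\omega_k)$, where $D^n(\omega,\omega')=2^{-n}\prod_{k=1}^n i^{|\alpha_k-\alpha_{k-1}|}\prod_{k=1}^n i^{-|\alpha'_k-\alpha'_{k-1}|}\,\delta_{\alpha_n\alpha'_n}$ for $\omega=\alpha_0\cdots\alpha_n$, $\omega'=\alpha'_0\cdots\alpha'_n$ ($i=\sqrt{-1}$). $c_n(j)$ is the number of $k\in\{1,\dots,n\}$ with $\alpha_k\ne\alpha_{k-1}$ for the path $\omega_j$. *)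

(* Defs.v *)
From HB Require Import structures.
From mathcomp Require Import all_boot all_order all_algebra all_field.
Set Implicit Arguments. Unset Strict Implicit. Unset Printing Implicit Defensive.
Import Order.TTheory GRing.Theory Num.Theory.
Local Open Scope ring_scope.

(* alpha n j k = the k-th letter (k = 0..n) of the n-path omega_j, i.e. the
   binary digit of j of weight 2^(n-k); alpha_n is least significant and
   alpha_0 = 0 for j < 2^n. *)
Definition alpha (n j k : nat) : bool := odd (j %/ 2 ^ (n - k)).

Definition cn (n j : nat) : nat :=
  (\sum_(1 <= k < n.+1) (alpha n j k != alpha n j k.-1))%N.

Definition Dn (n : nat) : 'M[algC]_(2 ^ n) :=
  \matrix_(j, l)
    ((2 ^+ n)^-1
     * (\prod_(1 <= k < n.+1) 'i ^+ (alpha n j k != alpha n j k.-1))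
     * (\prod_(1 <= k < n.+1) 'i ^- (alpha n l k != alpha n l k.-1))
     * (alpha n j n == alpha n l n)%:R).

Definition psi (n : nat) (b : bool) : 'cV[algC]_(2 ^ n) :=
  \col_j (if odd j == b then (sqrtC 2 ^+ (n - 1))^-1 * 'i ^+ cn n j else 0).

Definition cdot (m : nat) (u v : 'cV[algC]_m) : algC :=
  \sum_(j < m) u j 0 * (v j 0)^*.

(* Main.v *)
Require Import Defs.
From HB Require Import structures.
From mathcomp Require Import all_boot all_order all_algebra all_field.
From mathcomp Require Import ring.
Import Order.TTheory GRing.Theory Num.Theory.
Local Open Scope ring_scope.

Lemma syl_det (R : comNzRingType) (N m : nat) (x : R) (A : 'M[R]_(N, m)) (B : 'M[R]_(m, N)) :
  x ^+ m * \det (x%:M - A *m B) = x ^+ N * \det (x%:M - B *m A).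
Proof.
set M := block_mx (x%:M) A B (1%:M : 'M_m).
have h1 : M = block_mx 1%:M A 0 1%:M *m block_mx (x%:M - A *m B) 0 B 1%:M.
  rewrite mulmx_block !mul1mx !mul0mx ?mulmx0 !mulmx1 ?addr0 ?add0r ?subrK //.
have h2 : block_mx 1%:M 0 (- B) (x%:M) *m M = block_mx (x%:M) A 0 (x%:M - B *m A).
  rewrite mulmx_block !mul1mx !mul0mx !mulmx1 ?addr0 ?add0r.
  by rewrite mulNmx mul_mx_scalar mul_scalar_mx addNr [_ + x%:M]addrC !mulNmx.
have := congr1 determinant h2.
rewrite det_mulmx det_lblock det_ublock !det_scalar h1 det_mulmx det_ublock det_lblock.
by rewrite !det1 expr1n !mul1r !mulr1.
Qed.

Lemma syl_char (F : fieldType) (N m : nat) (A : 'M[F]_(N, m)) (B : 'M[F]_(m, N)) :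
  (m <= N)%N -> char_poly (A *m B) = 'X ^+ (N - m) * char_poly (B *m A).
Proof.
move=> hmN; rewrite /char_poly /char_poly_mx !map_mxM.
have := @syl_det _ _ _ 'X (map_mx polyC A) (map_mx polyC B).
have e : ('X : {poly F}) ^+ N = 'X ^+ m * 'X ^+ (N - m) by rewrite -exprD subnKC.
rewrite e -mulrA => /mulfI -> //.
by rewrite expf_neq0 // polyX_eq0.
Qed.

Lemma prod_i (n j : nat) :
  \prod_(1 <= k < n.+1) 'i ^+ (alpha n j k != alpha n j k.-1) = 'i ^+ cn n j :> algC.
Proof. by rewrite /cn (big_morph (fun k => 'i ^+ k) (exprD 'i) (expr0 'i)). Qed.

Lemma iXV (c : nat) : ('i ^+ c)^-1 = ('i ^+ c)^* :> algC.
Proof. by rewrite -exprVn invCi rmorphXn /= conjCi. Qed.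

Lemma iXn (c : nat) : 'i ^+ c * ('i ^+ c)^* = 1 :> algC.
Proof.
rewrite rmorphXn /= conjCi -exprMn.
have -> : 'i * - 'i = 1 :> algC by rewrite mulrN -expr2 sqrCi opprK.
by rewrite expr1n.
Qed.

Definition sc (n : nat) : algC := (sqrtC 2 ^+ (n - 1))^-1.

Lemma sc_conj n : (sc n)^* = sc n.
Proof. by rewrite geC0_conj // invr_ge0 exprn_ge0 // sqrtC_ge0 ler0n. Qed.

Lemma sc2 n : sc n * sc n = (2 ^+ (n - 1))^-1.
Proof. by rewrite /sc -invfM -expr2 -exprM mulnC exprM sqrtCK. Qed.

Lemma key n : (0 < n)%N -> (2 ^+ n)^-1 = 2^-1 * (sc n * sc n) :> algC.
Proof.
case: n => // n _; rewrite sc2 subn1 /= exprS invfM //.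
Qed.

Lemma psiE n b j : psi n b j 0 = (odd j == b)%:R * sc n * 'i ^+ cn n j.
Proof. by rewrite mxE; case: (odd j == b); rewrite /sc ?mul1r ?mul0r. Qed.

Lemma DnE n j l : Dn n j l =
  (2 ^+ n)^-1 * 'i ^+ cn n j * ('i ^+ cn n l)^* * (odd j == odd l)%:R.
Proof.
rewrite mxE prodfV !prod_i iXV /alpha subnn expn0 !divn1 //.
Qed.

Lemma Dentry n (hn : (0 < n)%N) j l : Dn n j l =
  2^-1 * (psi n false j 0 * (psi n false l 0)^* + psi n true j 0 * (psi n true l 0)^*).
Proof.
rewrite DnE !psiE !rmorphM /= sc_conj key //.
case: (odd j); case: (odd l) => /=; rewrite ?rmorph0 ?rmorph1; ring.
Qed.

Lemma cnt (m : nat) (b : bool) : \sum_(j < m.*2) ((odd j == b)%:R : algC) = m%:R.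
Proof.
elim: m => [|m IH]; first by rewrite big_ord0.
rewrite doubleS !big_ord_recr /= IH odd_double.
by case: b {IH} => /=; rewrite -!natrD ?addn0 ?addn1.
Qed.

Lemma cdot_psi n (hn : (0 < n)%N) b b' :
  cdot (psi n b) (psi n b') = (b == b')%:R.
Proof.
rewrite /cdot.
transitivity (\sum_(j < 2 ^ n) (b == b')%:R * (sc n * sc n) * ((odd j == b)%:R : algC)).
  apply: eq_bigr => j _; rewrite !psiE !rmorphM /= sc_conj rmorph_nat.
  have -> : (odd j == b)%:R * sc n * 'i ^+ cn n j * ((odd j == b')%:R * sc n * ('i ^+ cn n j)^*)
    = (odd j == b)%:R * (odd j == b')%:R * (sc n * sc n) * ('i ^+ cn n j * ('i ^+ cn n j)^*) :> algC
    by ring.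
  rewrite iXn mulr1.
  by case: (odd j); case: b; case: b' => /=; ring.
rewrite -mulr_sumr.
case: n hn => // n _.
have -> : (2 ^ n.+1 = (2 ^ n).*2)%N by rewrite expnS mul2n.
rewrite cnt sc2 subn1 /= natrX mulfVK ?mulr1 //.
by rewrite expf_neq0 // pnatr_eq0.
Qed.

Lemma psi_if n b (j : 'I_(2 ^ n)) : psi n b j 0 =
  if odd j == b then (sqrtC 2 ^+ (n - 1))^-1 * 'i ^+ cn n j else 0.
Proof. by rewrite mxE. Qed.

Lemma Dv n (hn : (0 < n)%N) (v : 'cV[algC]_(2 ^ n)) :
  Dn n *m v = 2^-1 *: (cdot v (psi n false) *: psi n false + cdot v (psi n true) *: psi n true).
Proof.
apply/matrixP => j k; rewrite (ord1 k) !mxE -!psi_if.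
under eq_bigr => l _ do rewrite Dentry // mulrDr mulrDl.
rewrite big_split mulrDr; congr (_ + _); rewrite /cdot !mulr_suml mulr_sumr;
  apply: eq_bigr => l _; ring.
Qed.

Lemma Dpsi n (hn : (0 < n)%N) b : Dn n *m psi n b = 2^-1 *: psi n b.
Proof.
rewrite Dv // !cdot_psi //.
by case: b => /=; rewrite ?scale0r ?scale1r ?addr0 ?add0r.
Qed.

Lemma eig n (hn : (0 < n)%N) (v : 'cV[algC]_(2 ^ n)) :
  Dn n *m v = 2%:R^-1 *: v <->
  exists a0 a1 : algC, v = a0 *: psi n false + a1 *: psi n true.
Proof.
split.
  rewrite Dv // => h; exists (cdot v (psi n false)), (cdot v (psi n true)).
  have := congr1 (fun w => 2 *: w) h.
  by rewrite /= !scalerA mulfV ?pnatr_eq0 // !scale1r.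
move=> [a0 [a1 ->]].
by rewrite mulmxDr -!scalemxAr !Dpsi // scalerDr !scalerA [a0 * _]mulrC [a1 * _]mulrC.
Qed.

Definition Am n : 'M[algC]_(2 ^ n, 2) := \matrix_(j, b) (2^-1 * psi n (odd b) j 0).
Definition Bm n : 'M[algC]_(2, 2 ^ n) := \matrix_(b, l) (psi n (odd b) l 0)^*.

Lemma AB n (hn : (0 < n)%N) : Am n *m Bm n = Dn n.
Proof.
apply/matrixP => j l; rewrite Dentry // !mxE big_ord_recl big_ord1 !mxE /=; ring.
Qed.

Lemma BA n (hn : (0 < n)%N) : Bm n *m Am n = 2^-1%:M.
Proof.
apply/matrixP => b b'; rewrite !mxE.
transitivity (2^-1 * cdot (psi n (odd b')) (psi n (odd b))).
  rewrite /cdot mulr_sumr; apply: eq_bigr => l _; rewrite !mxE; ring.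
rewrite cdot_psi //.
case: b => [[|[|//]] hb]; case: b' => [[|[|//]] hb'] /=; ring.
Qed.

Theorem theorem5p6 (n : nat) (hn : (1 <= n)%N) :
  char_poly (Dn n) = ('X - (2%:R^-1 : algC)%:P) ^+ 2 * 'X ^+ (2 ^ n - 2)
  /\ (forall b : bool, Dn n *m psi n b = 2%:R^-1 *: psi n b)
  /\ (forall b : bool, cdot (psi n b) (psi n b) = 1)
  /\ cdot (psi n false) (psi n true) = 0
  /\ (forall v : 'cV[algC]_(2 ^ n),
        Dn n *m v = 2%:R^-1 *: v <->
        exists a0 a1 : algC, v = a0 *: psi n false + a1 *: psi n true).
Proof.
split.
  rewrite -AB // syl_char; last first.
    by case: n hn => // n _; rewrite expnS leq_pmulr // expn_gt0.
  rewrite BA // char_poly_trig ?scalar_mx_is_trig // big_ord_recl big_ord1 !mxE /=.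
  by rewrite mulrC expr2 !mulr1n.
split; first exact: Dpsi.
split; first by move=> b; rewrite cdot_psi // eqxx.
split; first by rewrite cdot_psi.
exact: eig.
Qed.
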